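(* Let $1\le l\le r$ and consider a canonical noiseless MMV model $B=AX$ in which $A$ satisfies $0\le\delta^L_{2k-r+l}(A)<1$ and the nonzero rows of $X$ are in general position. Let $I\subset\{1,\dots,n\}$ satisfy $|I|\le\min(2(k-r)+l-1,\,k-1)$, $|I\setminus\operatorname{supp}X|\le k-r+l-1$ and $|I\cap\operatorname{supp}X|\ge k-r$. Then for every $j\notin I$, the following are equivalent: (a) $j\in\operatorname{supp}X$; (b) $\operatorname{rank}[A_I~B]=\operatorname{rank}[A_{I\cup\{j\}}~B]$; (c) $\mathbf a_j^{*}P^\perp_{R([A_I~B])}\mathbf a_j=0$.
   Context: Canonical MMV setting: $m,n,r,k$ are positive integers with $r\le m<n$ and $r\le k$. $A\in\mathbb{R}^{m\times n}$ is the sensing matrix with columns $\mathbf a_1,\dots,\mathbf a_n$; $X\in\mathbb{R}^{n\times r}$ has rows $\mathbf x^1,\dots,\mathbf x^n$, $\operatorname{supp}X=\{i:\mathbf x^i\neq 0\}$ and $|\operatorname{supp}X|=k$; $B=AX\in\mathbb{R}^{m\times r}$ has full column rank $r$. For an index set $I$, $A_I$ is the submatrix of $A$ formed by the columns indexed by $I$, and $[A_I~B]$ denotes horizontal concatenation. $R(M)$ is the column space of $M$, $P_{R(M)}$ the orthogonal projection onto it, and $P^\perp_{R(M)}=\mathrm{Id}-P_{R(M)}$; $^*$ denotes transpose. The lower restricted isometry constant $\delta^L_s(A)$ is the smallest $\delta\ge0$ such that $(1-\delta)\|\mathbf x\|_2^2\le\|A\mathbf x\|_2^2$ for all $\mathbf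 x$ with at most $s$ nonzero entries. ''The nonzero rows of $X$ are in general position'' means any $r$ of the $k$ nonzero rows of $X$ are linearly independent. *)

(* Defs.v *)
From HB Require Import structures.
From mathcomp Require Import all_boot all_order all_algebra.
Set Implicit Arguments. Unset Strict Implicit. Unset Printing Implicit Defensive.
Import Order.TTheory GRing.Theory Num.Theory.
Local Open Scope ring_scope.

Section Defs.
Variable R : rcfType.

Definition suppX (n r : nat) (X : 'M[R]_(n, r)) : {set 'I_n} :=
  [set i | row i X != 0].

(* A_I : columns of A indexed by I (in increasing order) *)
Definition colsI (m n : nat) (A : 'M[R]_(m, n)) (I : {set 'I_n}) : 'M[R]_(m, #|I|) :=
  \matrix_(i < m, j < #|I|) A i (enum_val j).

Definition sqnorm (p : nat) (x : 'cV[R]_p) : R := \sum_i (x i 0) ^+ 2.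

Definition sparse (p s : nat) (x : 'cV[R]_p) : Prop := (#|[set i | x i ord0 != 0%R]| <= s)%N.

(* d is the lower restricted isometry constant delta^L_s(A) *)
Definition RIP_lower_prop (m n s : nat) (A : 'M[R]_(m, n)) (d : R) : Prop :=
  forall x : 'cV[R]_n, sparse s x -> (1 - d) * sqnorm x <= sqnorm (A *m x).
Definition is_lower_RIC (m n s : nat) (A : 'M[R]_(m, n)) (d : R) : Prop :=
  0 <= d /\ RIP_lower_prop s A d /\
  (forall d', 0 <= d' -> RIP_lower_prop s A d' -> d <= d').

(* orthogonal projection onto the column space R(M) of M:
   with Q a row basis of M^T (rows of Q span R(M)), P = Q^T (Q Q^T)^{-1} Q *)
Definition orthproj (m p : nat) (M : 'M[R]_(m, p)) : 'M[R]_m :=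
  let Q := row_base (M^T) in (Q^T *m invmx (Q *m Q^T)) *m Q.

Definition orthproj_perp (m p : nat) (M : 'M[R]_(m, p)) : 'M[R]_m :=
  1%:M - orthproj M.

Definition rows_general_position (n r : nat) (X : 'M[R]_(n, r)) : Prop :=
  forall S : {set 'I_n}, S \subset suppX X -> #|S| = r ->
    \rank (colsI X^T S) = r.

End Defs.

(* Main.v *)
Require Import Defs.
From HB Require Import structures.
From mathcomp Require Import all_boot all_order all_algebra.
From mathcomp Require Import zify.
Import Order.TTheory GRing.Theory Num.Theory.
Local Open Scope ring_scope.
Set Warnings "-notation-overridden".
Section Proj.
Variable R : rcfType.

Lemma sqsum0 (p : nat) (v : 'cV[R]_p) : (v^T *m v) 0 0 = 0 -> v = 0.
Proof.
rewrite mxE => H; apply/matrixP => i j; rewrite (ord1 j) [RHS]mxE.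
have Hn : forall k : 'I_p, true -> 0 <= v^T 0 k * v k 0.
  by move=> k _; rewrite mxE -expr2; exact: sqr_ge0.
have := psumr_eq0P Hn H (i:=i) isT.
by rewrite mxE => /eqP; rewrite mulf_eq0 orbb => /eqP.
Qed.

Lemma QQt_unit (q m : nat) (Q : 'M[R]_(q,m)) : row_free Q -> Q *m Q^T \in unitmx.
Proof.
move=> fQ; rewrite -row_free_unit -kermx_eq0; apply/eqP/row_matrixP => i.
rewrite row0; set v := row i _.
have H : v *m (Q *m Q^T) = 0 by apply/sub_kermxP; rewrite row_sub.
have H2 : (v *m Q)^T = 0.
  apply: sqsum0. rewrite (_ : ((v *m Q)^T)^T = v *m Q); last exact: trmxK. rewrite trmx_mul !mulmxA -(mulmxA v) H mul0mx mxE.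
  done.
have H3 : v *m Q = 0 *m Q by rewrite mul0mx -[v *m Q]trmxK H2 trmx0.
exact: (row_free_inj fQ H3).
Qed.

Lemma proj_gen (q m : nat) (Q : 'M[R]_(q,m)) (a : 'cV[R]_m) : row_free Q ->
  ((a^T *m (1%:M - (Q^T *m invmx (Q *m Q^T)) *m Q) *m a) 0 0 = 0)
  <-> (a^T <= Q)%MS.
Proof.
move=> fQ; set G := invmx (Q *m Q^T).
have uQ : Q *m Q^T \in unitmx by apply: QQt_unit.
have GT : G^T = G.
  rewrite /G trmx_inv trmx_mul (_ : Q^T^T = Q) //; exact: trmxK.
have QG : Q *m Q^T *m G = 1%:M by rewrite /G mulmxV.
set P := Q^T *m G *m Q.
have PT : P^T = P.
  rewrite /P !trmx_mul GT (_ : Q^T^T = Q); last exact: trmxK.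
  by rewrite mulmxA.
have QP : Q *m P = Q by rewrite /P !mulmxA QG mul1mx.
have PP : P *m P = P by rewrite {1}/P -!mulmxA QP !mulmxA.
have T1 : (1%:M - P)^T = 1%:M - P.
    rewrite linearB /= PT; congr (_ - _); exact: tr_scalar_mx.
have K : (1%:M - P)^T *m (1%:M - P) = 1%:M - P.

  rewrite T1 mulmxBl mulmxBr mul1mx mulmxBr mulmx1 PP.
  by rewrite subrr subr0 mul1mx.
split.
- move=> H.
  have H1 : (1%:M - P) *m a = 0.
    apply: sqsum0; rewrite trmx_mul mulmxA -[_ *m (1%:M - P)]mulmxA.
    by rewrite K.
  have H2 : a = P *m a by apply/eqP; rewrite -subr_eq0 -{1}[a]mul1mx -mulmxBl H1.
  by rewrite H2 trmx_mul PT /P mulmxA submxMl.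
- case/submxP => D HD.
  have H1 : a^T *m (1%:M - P) = 0 by rewrite mulmxBr mulmx1 HD -mulmxA QP subrr.
  by rewrite H1 mul0mx mxE.
Qed.

Lemma proj_main (m p : nat) (M : 'M[R]_(m,p)) (a : 'cV[R]_m) :
  ((a^T *m (1%:M - (let Q := row_base (M^T) in (Q^T *m invmx (Q *m Q^T)) *m Q)) *m a) 0 0 = 0)
  <-> (a^T <= M^T)%MS.
Proof.
have [h1 h2] := @proj_gen _ _ (row_base M^T) a (row_base_free M^T).
split => [/h1|H]; first by rewrite eq_row_base.
by apply: h2; rewrite eq_row_base.
Qed.
End Proj.

Section Cols.
Variable R : rcfType.
Variables m n : nat.
Variable A : 'M[R]_(m,n).

Lemma row_colsIT (J : {set 'I_n}) t : row t (colsI A J)^T = (col (enum_val t) A)^T.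
Proof. by apply/rowP => k; rewrite !mxE. Qed.

Lemma col_sub_colsI (J : {set 'I_n}) i : i \in J -> ((col i A)^T <= (colsI A J)^T)%MS.
Proof. by move=> Hi; rewrite -(enum_rankK_in Hi Hi) -row_colsIT row_sub. Qed.

Lemma colsI_sub (J : {set 'I_n}) p (W : 'M_(p,m)) :
  (forall i, i \in J -> ((col i A)^T <= W)%MS) -> ((colsI A J)^T <= W)%MS.
Proof. by move=> H; apply/row_subP => t; rewrite row_colsIT; apply: H; apply: enum_valP. Qed.

Lemma rank_equiv p (B : 'M_(m,p)) (I : {set 'I_n}) j :
  \rank (row_mx (colsI A I) B) = \rank (row_mx (colsI A (j |: I)) B) <->
  ((col j A)^T <= (row_mx (colsI A I) B)^T)%MS.
Proof.
rewrite -[\rank (row_mx (colsI A I) B)]mxrank_tr -[\rank (row_mx (colsI A (j |: I)) B)]mxrank_tr.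
set N := (row_mx (colsI A I) B)^T; set N' := (row_mx (colsI A (j |: I)) B)^T.
have BN : (B^T <= N)%MS by rewrite /N tr_row_mx -addsmxE addsmxSr.
have IN : ((colsI A I)^T <= N)%MS by rewrite /N tr_row_mx -addsmxE addsmxSl.
have sub : (N <= N')%MS.
  have BN' : (B^T <= N')%MS by rewrite /N' tr_row_mx -addsmxE addsmxSr.
  rewrite {1}/N tr_row_mx col_mx_sub BN' andbT /N' tr_row_mx.
  rewrite -addsmxE; apply: colsI_sub => i Hi; apply: submx_trans (addsmxSl _ _).
  by apply: col_sub_colsI; rewrite setU1r.
have H := mxrank_leqif_sup sub.
have E : (N' <= N)%MS <-> ((col j A)^T <= N)%MS.
  rewrite /N' tr_row_mx col_mx_sub BN andbT; split => [H1|H1].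
    apply: submx_trans H1; apply: col_sub_colsI; exact: setU11.
  apply: colsI_sub => i; rewrite in_setU1 => /predU1P [->|Hi] //.
  apply: submx_trans IN; exact: col_sub_colsI.
split => [e|s]; first by apply/E; rewrite -H.2 e eqxx.
by apply/eqP; rewrite H.2; apply/E.
Qed.
End Cols.
Lemma extend_set (n : nat) (T S : {set 'I_n}) (r : nat) :
  T \subset S -> (#|T| <= r)%N -> (r <= #|S|)%N ->
  exists S' : {set 'I_n}, (T \subset S') /\ (S' \subset S) /\ #|S'| = r.
Proof.
move=> TS h1 h2.
have [d Hd] : exists d, r = (#|T| + d)%N by exists (r - #|T|)%N; lia.
elim: d T TS h1 Hd => [|d IH] T TS h1 Hd.
  by exists T; rewrite Hd addn0 subxx.
have : S :\: T != set0.
  rewrite setD_eq0; apply/negP => ST.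
  have := subset_leq_card ST; lia.
case/set0Pn => x; rewrite in_setD => /andP [xT xS].
have cT : #|x |: T| = (#|T| + 1)%N by rewrite cardsU1 xT; lia.
have [S' [h3 [h4 h5]]] : exists S' : {set 'I_n}, (x |: T \subset S') /\ (S' \subset S) /\ #|S'| = r.
  apply: IH; first by rewrite subUset sub1set xS TS.
  - lia.
  - lia.
exists S'; split; last by []; apply: subset_trans h3; exact: subsetUr.
Qed.

Lemma suppX0 (R : rcfType) (n r : nat) (X : 'M[R]_(n,r)) i s : i \notin suppX X -> X i s = 0.
Proof.
rewrite /suppX inE negbK => /eqP H.
have := congr1 (fun M : 'rV_r => M 0 s) H; by rewrite !mxE.
Qed.

Lemma forward (R : rcfType) m n r k (A : 'M[R]_(m,n)) (X : 'M[R]_(n,r)) (I : {set 'I_n}) j :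
  #|suppX X| = k -> (r <= k)%N -> rows_general_position X ->
  (k - r <= #|I :&: suppX X|)%N ->
  j \notin I -> j \in suppX X -> ((col j A)^T <= (row_mx (colsI A I) (A *m X))^T)%MS.
Proof.
move=> hS hrk hgen hIin jI jS.
set S := suppX X in hS hIin jS *.
set N := (row_mx (colsI A I) (A *m X))^T.
have BN : ((A *m X)^T <= N)%MS by rewrite /N tr_row_mx -addsmxE addsmxSr.
have IN : ((colsI A I)^T <= N)%MS by rewrite /N tr_row_mx -addsmxE addsmxSl.
have cT : (#|S :\: I| <= r)%N.
  have := cardsID I S; rewrite setIC; lia.
have rS : (r <= #|S|)%N by rewrite hS.
have [S' [h1 [h2 h3]]] := @extend_set _ _ _ _ (subsetDl S I) cT rS.
have jS' : j \in S' by apply: (subsetP h1); rewrite in_setD jS jI.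
set C := colsI X^T S'.
have fC : row_full C.
  by rewrite /row_full /C hgen // h3.
set t0 := enum_rank_in jS' j.
have [w Hw] : exists w : 'rV_r, delta_mx 0 t0 = w *m C.
  by apply/submxP; exact: submx_full.
set c := w *m X^T.
have cS' : forall i, i \in S' -> c 0 i = (i == j)%:R.
  move=> i Hi; have := congr1 (fun M : 'rV_#|S'| => M 0 (enum_rank_in jS' i : 'I_#|S'|)) Hw.
  have E1 : (enum_rank_in jS' i == t0) = (i == j).
    by rewrite -(inj_eq enum_val_inj) /t0 !enum_rankK_in.
  have E2 : forall s, C s (enum_rank_in jS' i) = X^T s i.
    by move=> s; rewrite /C !mxE (enum_rankK_in jS' Hi).
  rewrite !mxE /= E1 => ->; apply: eq_bigr => s _; by rewrite E2.
have cS : forall i, i \notin S -> c 0 i = 0.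
  move=> i Hi; rewrite mxE big1 // => s _; rewrite mxE suppX0 ?mulr0 //.
have dec : w *m (A *m X)^T = \sum_i c 0 i *: (col i A)^T.
  rewrite trmx_mul mulmxA mulmx_sum_row; apply: eq_bigr => i _; by rewrite tr_col.
rewrite (bigD1 j) //= cS' // eqxx scale1r in dec.
have -> : (col j A)^T = w *m (A *m X)^T - \sum_(i | i != j) c 0 i *: (col i A)^T.
  by rewrite dec addrK.
apply: addmx_sub.
  apply: submx_trans BN; exact: submxMl.
rewrite eqmx_opp; apply: summx_sub => i nij.
case: (boolP (i \in I)) => iI.
  apply: scalemx_sub; apply: submx_trans IN; exact: col_sub_colsI.
case: (boolP (i \in S)) => iS.
  rewrite cS' ?(negbTE nij) ?scale0r ?sub0mx //.
  by apply: (subsetP h1); rewrite in_setD iS iI.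
by rewrite cS // scale0r sub0mx.
Qed.

Lemma backward (R : rcfType) m n r k l (A : 'M[R]_(m,n)) (X : 'M[R]_(n,r))
  (I : {set 'I_n}) j (d : R) :
  #|suppX X| = k -> (r <= k)%N -> (1 <= l)%N -> RIP_lower_prop (2 * k - r + l)%N A d ->
  d < 1 -> (#|I :\: suppX X| <= k - r + l - 1)%N -> j \notin I ->
  ((col j A)^T <= (row_mx (colsI A I) (A *m X))^T)%MS -> j \in suppX X.
Proof.
move=> hS hrk hl hRIP hd hIout jI H; apply/negPn/negP => jS.
set S := suppX X in hS hIout jS.
case/submxP: H => D HD.
rewrite tr_row_mx -[D]hsubmxK mul_row_col in HD.
set D1 := lsubmx D in HD; set D2 := rsubmx D in HD.
set E : 'M[R]_(#|I|, n) := \matrix_(t, i) (enum_val t == i)%:R.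
have ET : (colsI A I)^T = E *m A^T.
  apply/matrixP => t q; rewrite !mxE (bigD1 (enum_val t)) //= !mxE eqxx mul1r.
  rewrite big1 ?addr0 // => i ne; rewrite !mxE eq_sym (negbTE ne) mul0r //.
pose v : 'rV[R]_n := (delta_mx 0 j) - D1 *m E - D2 *m X^T.
have vA : v *m A^T = 0.
  rewrite !mulmxBl -!mulmxA -ET -trmx_mul -rowE -tr_col HD.
  by rewrite -addrA -opprD subrr.
have s1 : forall i, i \notin I -> (D1 *m E) 0 i = 0.
  move=> i iI; rewrite mxE big1 // => t _; rewrite mxE.
  have ne : enum_val t != i by apply: contraNneq iI => <-; exact: enum_valP.
  by rewrite /E mxE (negbTE ne) mulr0.
have s2 : forall i, i \notin S -> (D2 *m X^T) 0 i = 0.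
  move=> i iS; rewrite mxE big1 // => s _; by rewrite !mxE (@suppX0 _ _ _ X i s iS) mulr0.
have ve : forall i : 'I_n, v 0 i = (delta_mx 0 j : 'rV[R]_n) 0 i - (D1 *m E) 0 i - (D2 *m X^T) 0 i.
  by move=> i; rewrite /v !mxE.
have vj : v 0 j = 1 by rewrite ve s1 // s2 // !mxE !eqxx /= !subr0.
have vz : forall i, i \notin j |: ((I :\: S) :|: S) -> v 0 i = 0.
  move=> i; rewrite !inE negb_or => /andP [nij H2]; move: H2.
  rewrite negb_or => /andP [H3 iS]; rewrite iS /= in H3.
  rewrite ve s1 // s2; last by rewrite /S inE.
  by rewrite !mxE eqxx /= (negbTE nij) !subr0.
pose x := v^T.
have sp : sparse (2 * k - r + l)%N x.
  rewrite /sparse; apply: leq_trans (subset_leq_card (_ : _ \subset j |: ((I :\: S) :|: S))) _.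
    apply/subsetP => i; rewrite inE mxE => nz; apply/negPn/negP => H.
    by move: nz; rewrite vz // eqxx.
  rewrite cardsU1 cardsU.
  have : ((j \notin (I :\: S) :|: S) <= 1)%N by case: (_ \notin _).
  lia.
have Ax : A *m x = 0.
  have -> : A *m x = (v *m A^T)^T.
    by rewrite /x trmx_mul (_ : A^T^T = A) //; exact: trmxK.
  by rewrite vA trmx0.
have s0 : sqnorm (A *m x) = 0.
  by rewrite Ax /sqnorm big1 // => i _; rewrite mxE expr0n.
have s1x : 1 <= sqnorm x.
  rewrite /sqnorm (bigD1 j) //= mxE vj expr1n lerDl.
  by apply: sumr_ge0 => i _; exact: sqr_ge0.
have := hRIP x sp; rewrite s0.
have pos : 0 < (1 - d) * sqnorm x.
  by apply: mulr_gt0; [rewrite subr_gt0 | exact: lt_le_trans ltr01 s1x].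
by rewrite leNgt pos.
Qed.

Theorem theorem2 (R : rcfType) (m n r k l : nat)
  (A : 'M[R]_(m, n)) (X : 'M[R]_(n, r)) (I : {set 'I_n})
  (hr : (1 <= r)%N) (hrm : (r <= m)%N) (hmn : (m < n)%N) (hrk : (r <= k)%N)
  (hl1 : (1 <= l)%N) (hlr : (l <= r)%N)
  (hsupp : #|suppX X| = k)
  (hB : \rank (A *m X) = r)
  (hRIC : exists d : R, is_lower_RIC (2 * k - r + l)%N A d /\ d < 1)
  (hgen : rows_general_position X)
  (hI : (#|I| <= minn (2 * (k - r) + l - 1) (k - 1))%N)
  (hIout : (#|I :\: suppX X| <= k - r + l - 1)%N)
  (hIin : (k - r <= #|I :&: suppX X|)%N) :
  forall j : 'I_n, j \notin I ->
    (j \in suppX X <->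
       \rank (row_mx (colsI A I) (A *m X)) = \rank (row_mx (colsI A (j |: I)) (A *m X)))
    /\
    (\rank (row_mx (colsI A I) (A *m X)) = \rank (row_mx (colsI A (j |: I)) (A *m X)) <->
       ((col j A)^T *m orthproj_perp (row_mx (colsI A I) (A *m X)) *m col j A) 0 0 = 0).
Proof.
move=> j jI.
have [d [[d0 [hRIP _]] hd1]] := hRIC.
have E2 := @rank_equiv R m n A r (A *m X) I j.
have E3 : ((col j A)^T *m orthproj_perp (row_mx (colsI A I) (A *m X)) *m col j A) 0 0 = 0
   <-> ((col j A)^T <= (row_mx (colsI A I) (A *m X))^T)%MS.
  exact: proj_main.
split.
  split => [jS | h].
    by apply/E2; exact: (@forward R m n r k A X I j hsupp hrk hgen hIin jI jS).
  exact: (@backward R m n r k l A X I j d hsupp hrk hl1 hRIP hd1 hIout jI (proj1 E2 h)).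
split => h.
  by apply/E3; apply/E2.
by apply/E2; apply/E3.
Qed.
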